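(* Let $I$ be a prime ideal of $\mathbb{R}[x]=\mathbb{R}[x_1,\dots,x_n]$ such that $I'=\mathbb{C}[x]I$ is not prime in $\mathbb{C}[x]$. Then there exists an irreducible polynomial $g\in\mathbb{C}[x]\setminus I'$ such that $g\overline{g}\in I$.
   Context: $\mathbb{C}[x]I=\{\sum p_ih_i: p_i\in\mathbb{C}[x],h_i\in I\}$ is the ideal of $\mathbb{C}[x]$ generated by $I$. For $g=\sum_a g_a x^a\in\mathbb{C}[x]$, $\overline{g}=\sum_a\overline{g_a}x^a$ (coefficientwise complex conjugation). *)

(* Defs.v *)
From HB Require Import structures.
From mathcomp Require Import all_boot all_order all_algebra.
From mathcomp Require Import mpoly.
From mathcomp Require Import complex.
From mathcomp Require Import reals.
Set Implicit Arguments. Unset Strict Implicit. Unset Printing Implicit Defensive.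
Import Order.TTheory GRing.Theory Num.Theory.
Local Open Scope ring_scope.

Definition is_ideal (A : comNzRingType) (I : A -> Prop) : Prop :=
  [/\ I 0,
      (forall a b, I a -> I b -> I (a + b)) &
      (forall r a, I a -> I (r * a))].

Definition prime_ideal (A : comNzRingType) (I : A -> Prop) : Prop :=
  [/\ is_ideal I, ~ I 1 &
      (forall a b, I (a * b) -> I a \/ I b)].

Definition is_unit (A : comNzRingType) (u : A) : Prop := exists v : A, v * u = 1.

Definition irreducible_elt (A : comNzRingType) (g : A) : Prop :=
  [/\ g != 0, ~ is_unit g &
      (forall a b : A, g = a * b -> is_unit a \/ is_unit b)].

Definition realC_mpoly (n : nat) (R : rcfType) (p : {mpoly R[n]}) : {mpoly R[i][n]} :=
  map_mpoly (fun r : R => (r%:C)%C) p.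

Definition conj_mpoly (n : nat) (R : rcfType) (g : {mpoly R[i][n]}) : {mpoly R[i][n]} :=
  map_mpoly (@conjc R) g.

Definition extend_ideal (n : nat) (R : rcfType) (I : {mpoly R[n]} -> Prop)
  : {mpoly R[i][n]} -> Prop :=
  fun q => exists s : seq ({mpoly R[i][n]} * {mpoly R[n]}),
    (forall ph, ph \in s -> I ph.2) /\
    q = \sum_(ph <- s) ph.1 * realC_mpoly ph.2.

(* Main.v *)
Require Import Defs.
From HB Require Import structures.
From mathcomp Require Import all_boot all_order all_algebra.
From mathcomp Require Import mpoly complex reals.
From Stdlib Require Import Classical.
From mathcomp Require Import zify.
Set Implicit Arguments. Unset Strict Implicit. Unset Printing Implicit Defensive.
Import Order.TTheory GRing.Theory Num.Theory.
Local Open Scope ring_scope.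

Definition reC (R : rcfType) (z : R[i]) : R := complex.Re z.

Lemma reC_zmod (R : rcfType) : zmod_morphism (@reC R).
Proof. by case=> a b [c d]. Qed.

HB.instance Definition _ (R : rcfType) :=
  GRing.isZmodMorphism.Build R[i] R (@reC R) (@reC_zmod R).

Definition re_mpoly (n : nat) (R : rcfType) (q : {mpoly R[i][n]}) : {mpoly R[n]} :=
  map_mpoly (@reC R) q.

Lemma negb0 (R : rcfType) (b : R) : - b = b -> b = 0.
Proof. move=> hb; apply/eqP. have : b *+ 2 == 0 by rewrite mulr2n -{1}hb addNr.
by rewrite mulrn_eq0. Qed.

Section S.
Context (n : nat) (R : rcfType).
Local Notation P := {mpoly R[i][n]}.
Local Notation Q := {mpoly R[n]}.

Lemma mcoeff_re (q : P) m : (re_mpoly q)@_m = complex.Re (q@_m).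
Proof. by rewrite /re_mpoly mcoeff_map_mpoly. Qed.

Lemma mcoeff_realC (h : Q) m : (realC_mpoly h)@_m = ((h@_m)%:C)%C.
Proof. by rewrite /realC_mpoly (mcoeff_map_mpoly (real_complex R)). Qed.

Lemma mcoeff_conj (g : P) m : (conj_mpoly g)@_m = conjc (g@_m).
Proof. by rewrite /conj_mpoly (mcoeff_map_mpoly (@conjc R)). Qed.

Lemma realCM (a b : Q) : realC_mpoly (a * b) = realC_mpoly a * realC_mpoly b.
Proof. exact: (rmorphM (map_mpoly (real_complex R))). Qed.

Lemma realC1 : realC_mpoly (1 : Q) = 1.
Proof. exact: (rmorph1 (map_mpoly (real_complex R))). Qed.

Lemma conjM (a b : P) : conj_mpoly (a * b) = conj_mpoly a * conj_mpoly b.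
Proof. exact: (rmorphM (map_mpoly (@conjc R))). Qed.

Lemma conj1 : conj_mpoly (1 : P) = 1.
Proof. exact: (rmorph1 (map_mpoly (@conjc R))). Qed.

Lemma conjK (a : P) : conj_mpoly (conj_mpoly a) = a.
Proof. by apply/mpolyP=> m; rewrite !mcoeff_conj conjcK. Qed.

Lemma re_sum (T : Type) (s : seq T) (F : T -> P) :
  re_mpoly (\sum_(i <- s) F i) = \sum_(i <- s) re_mpoly (F i).
Proof. exact: (raddf_sum (map_mpoly (@reC R))). Qed.

Local Opaque realC_mpoly conj_mpoly re_mpoly.

Lemma re_mulr (p : P) (h : Q) : re_mpoly (p * realC_mpoly h) = re_mpoly p * h.
Proof.
apply/mpolyP=> m; rewrite mcoeff_re !mcoeffM.
rewrite -[complex.Re _]/(reC _) raddf_sum; apply: eq_bigr => k _.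
by rewrite mcoeff_re mcoeff_realC /reC; case: (p@_k.1) => a b /=; rewrite !mulr0 subr0.
Qed.

Lemma re1 : re_mpoly (1 : P) = 1.
Proof. by apply/mpolyP=> m; rewrite mcoeff_re !mcoeff1; case: (m == 0%MM). Qed.

Lemma re_realC (h : Q) : re_mpoly (realC_mpoly h) = h.
Proof. by rewrite -[realC_mpoly h]mul1r re_mulr re1 mul1r. Qed.

Lemma realC_inj : injective (@realC_mpoly n R).
Proof. by move=> a b h; rewrite -(re_realC a) -(re_realC b) h. Qed.

Lemma conj_real (q : P) : conj_mpoly q = q -> q = realC_mpoly (re_mpoly q).
Proof.
move=> h; apply/mpolyP=> m; rewrite mcoeff_realC mcoeff_re.
have := congr1 (mcoeff m) h; rewrite mcoeff_conj.
case: (q@_m) => a b. move=> [] /negb0 ->. reflexivity.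
Qed.
Lemma conj_realC (h : Q) : conj_mpoly (realC_mpoly h) = realC_mpoly h.
Proof. apply/mpolyP=> m; rewrite [LHS]mcoeff_conj [in LHS]mcoeff_realC [RHS]mcoeff_realC; exact: conjc_real. Qed.

Definition N (q : P) : Q := re_mpoly (q * conj_mpoly q).

Lemma NE (q : P) : realC_mpoly (N q) = q * conj_mpoly q.
Proof.
by rewrite /N -conj_real // conjM conjK mulrC.
Qed.

Local Opaque N.

Lemma NM (a b : P) : N (a * b) = N a * N b.
Proof.
apply: (@realC_inj (N (a * b)) (N a * N b)).
rewrite [RHS]realCM.
apply: (etrans (NE (a * b))).
apply: (etrans (congr1 (fun x => a * b * x) (conjM a b))).
apply: (etrans (mulrACA _ _ _ _)).
exact: (esym (congr2 *%R (NE a) (NE b))).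
Qed.


Lemma msize_nonunit (c : P) : c != 0 -> ~ is_unit c -> (1 < msize c)%N.
Proof.
move=> c0 nu; rewrite ltnNge; apply/negP => h; apply: nu.
have ceq := msize1_polyC h.
move: ceq; set x := c@_0 => ceq.
have x0 : x != 0.
  apply/eqP=> x0; move: c0; rewrite ceq x0 mpolyC0 eqxx; by [].
exists (x^-1)%:MP; rewrite ceq -mpolyCM mulVf //; exact: mpolyC1.
Qed.

Lemma msizeM_idom (b c : P) : b != 0 -> c != 0 ->
  msize (b * c) = (msize b + msize c).-1.
Proof. move=> b0 c0; apply: msizeM_proper; rewrite mulf_neq0 // mleadc_eq0 //. Qed.

Section Ideal.
Context (I : Q -> Prop) (HI : is_ideal I).
Local Notation E := (extend_ideal I).

Lemma E0 : E 0.
Proof. exists [::]; split; [by [] | by rewrite big_nil]. Qed.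

Lemma ED a b : E a -> E b -> E (a + b).
Proof.
move=> [s1 [h1 ->]] [s2 [h2 ->]]; exists (s1 ++ s2); split.
  by move=> ph; rewrite mem_cat => /orP[]; [apply: h1 | apply: h2].
by rewrite big_cat.
Qed.

Lemma EM r a : E a -> E (r * a).
Proof.
move=> [s [hs ->]]; exists [seq (r * ph.1, ph.2) | ph <- s]; split.
  by move=> ph /mapP [x xs ->] /=; apply: hs.
rewrite big_map mulr_sumr; apply: eq_bigr => ph _ /=; by rewrite mulrA.
Qed.

Lemma EMr r a : E a -> E (a * r).
Proof. by rewrite mulrC; apply: EM. Qed.

Lemma E_ideal : is_ideal E.
Proof. split; [exact: E0 | exact: ED | exact: EM]. Qed.

Lemma I_sum (s : seq (P * Q)) : (forall ph, ph \in s -> I ph.2) ->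
  I (\sum_(ph <- s) re_mpoly ph.1 * ph.2).
Proof.
case: HI => I0 ID IM.
elim: s => [|x s IH] hs; first by rewrite big_nil.
rewrite big_cons; apply: ID.
  by apply: IM; apply: hs; rewrite mem_head.
by apply: IH => ph phs; apply: hs; rewrite in_cons phs orbT.
Qed.

Lemma E_real h : E (realC_mpoly h) -> I h.
Proof.
move=> [s [hs eq]].
rewrite -(re_realC h) eq re_sum.
have -> : \sum_(i <- s) re_mpoly (i.1 * realC_mpoly i.2) =
          \sum_(ph <- s) re_mpoly ph.1 * ph.2.
  by apply: eq_bigr => ph _; rewrite re_mulr.
exact: I_sum.
Qed.

End Ideal.

Definition goalP (I : Q -> Prop) := exists g : P,
    [/\ irreducible_elt g,
        ~ extend_ideal I g &
        exists h : Q, I h /\ realC_mpoly h = g * conj_mpoly g].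

Lemma key (I : Q -> Prop) (HI : prime_ideal I) k : forall a : P,
  (msize a < k)%N -> ~ extend_ideal I a -> I (N a) -> goalP I.
Proof.
case: HI => [[I0 ID IM] I1n Ipr].
elim: k => [//|k IH] a ltak nEa INa.
case: (classic (irreducible_elt a)) => [irr|nirr].
  by exists a; split=> //; exists (N a); split=> //; apply: NE.
have a0 : a != 0.
  apply/eqP=> a0; apply: nEa; rewrite a0; exact: E0.
have nua : ~ is_unit a.
  move=> [v hv]; apply: I1n.
  have e : N v * N a = 1.
    apply: (@realC_inj (N v * N a) 1).
    apply: (etrans (realCM (N v) (N a))).
    apply: (etrans (congr2 *%R (NE v) (NE a))).
    apply: (etrans (mulrACA _ _ _ _)).
    apply: (etrans (congr1 (fun x => v * a * x) (esym (conjM v a)))).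
    apply: (etrans (congr2 (fun x y => x * conj_mpoly y) hv hv)).
    apply: (etrans (congr1 (fun x => 1 * x) conj1)).
    apply: (etrans (mul1r _)); exact: (esym realC1).
  by rewrite -e; apply: IM.
have : ~ forall b c : P, a = b * c -> is_unit b \/ is_unit c.
  by move=> H; apply: nirr; split.
move/not_all_ex_not => [b].
move/not_all_ex_not => [c].
move=> H0. have [abc H1] := imply_to_and _ _ H0. have [nub nuc] := not_or_and _ _ H1.
have b0 : b != 0 by apply/eqP=> b0; move: a0; rewrite abc b0 mul0r eqxx.
have c0 : c != 0 by apply/eqP=> c0; move: a0; rewrite abc c0 mulr0 eqxx.
have sb := msize_nonunit b0 nub.
have sc := msize_nonunit c0 nuc.
have sa := msizeM_idom b0 c0.
rewrite -abc in sa.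
have nEb : ~ extend_ideal I b by move=> Eb; apply: nEa; rewrite abc; apply: EMr.
have nEc : ~ extend_ideal I c by move=> Ec; apply: nEa; rewrite abc; apply: EM.
move: INa; rewrite abc NM => /Ipr [INb | INc].
  apply: (IH b) => //; rewrite sa in ltak.
  move: ltak sc; set x := msize b; set y := msize c; move=> ltak sc. lia.
apply: (IH c) => //; rewrite sa in ltak.
move: ltak sb; set x := msize b; set y := msize c; move=> ltak sb. lia.
Qed.

End S.

Theorem lemma3p4 (R : realType) (n : nat) (I : {mpoly R[n]} -> Prop) :
  prime_ideal I ->
  ~ prime_ideal (extend_ideal I) ->
  exists g : {mpoly R[i][n]},
    [/\ irreducible_elt g,
        ~ extend_ideal I g &
        exists h : {mpoly R[n]}, I h /\ realC_mpoly h = g * conj_mpoly g].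
Proof.
move=> HI nE.
have HI' := HI; case: HI' => [idI I1n Ipr].
have nE1 : ~ extend_ideal I 1.
  by rewrite -(@realC1 n R) => /(E_real idI).
have : ~ forall a b, extend_ideal I (a * b) -> extend_ideal I a \/ extend_ideal I b.
  by move=> H; apply: nE; split => //; apply: E_ideal.
move/not_all_ex_not => [a].
move/not_all_ex_not => [b].
move=> H0. have [Eab H1] := imply_to_and _ _ H0. have [nEa nEb] := not_or_and _ _ H1.
have : I (N (a * b)).
  apply: (E_real idI); rewrite NE; exact: EMr.
rewrite NM => /Ipr [INa | INb].
  exact: (@key n R I HI (msize a).+1 a).
exact: (@key n R I HI (msize b).+1 b).
Qed.
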